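(* For $n\ge 0$, $$(\mathfrak C_0+\mathfrak C_2)^n=(2n)!\sum_{l=0}^{n+1}\frac{(-1)^{n-l-1}(2l-1)(3n^2-3nl+2l^2+4n-3l+1)(2n-2l-1)!!}{3\cdot 2^{n-l}(n-l+1)!\,(2l)!}\mathfrak C_{2l}.$$
   Context: The numbers $\mathfrak C_{2n}$ (Cauchy numbers with level $2$) are defined by $\frac{t}{{\rm arcsinh}\,t}=\sum_{n=0}^\infty\mathfrak C_{2n}\frac{t^{2n}}{(2n)!}$. Convolution notation: $(\mathfrak C_{2j_1}+\cdots+\mathfrak C_{2j_k})^n:=\sum_{i_1+\cdots+i_k=n,\ i_1,\dots,i_k\ge0}\frac{(2n)!}{(2i_1)!\cdots(2i_k)!}\mathfrak C_{2i_1+2j_1}\cdots\mathfrak C_{2i_k+2j_k}$. Double factorials: $(2i-1)!!=(2i-1)(2i-3)\cdots1$ for $i\ge1$, $(-1)!!=1$, and $(-(2i+1))!!=\frac{(-1)^i}{(2i-1)!!}$ for $i\ge1$. *)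

(* Defs.v *)
From mathcomp Require Import all_boot all_order all_algebra.
Set Implicit Arguments. Unset Strict Implicit. Unset Printing Implicit Defensive.
Import Order.TTheory GRing.Theory Num.Theory.
Local Open Scope ring_scope.

(* Maclaurin coefficient of t^(2k+1) in arcsinh t:
   arcsinh t = sum_k (-1)^k (2k)! / (4^k (k!)^2 (2k+1)) t^(2k+1). *)
Definition asinh_coef (k : nat) : rat :=
  (-1) ^+ k * ((2 * k)`!)%:R / ((4 ^ k * (k`!) ^ 2 * (2 * k).+1)%N)%:R.

(* t / arcsinh t = 1 / (sum_k asinh_coef k t^(2k)) as formal power series.
   bseq n = [:: b_0; ...; b_n], the coefficients of t^(2i) of the reciprocal:
   b_0 = 1 and sum_{k=0}^{n} asinh_coef k * b_(n-k) = 0 for n >= 1. *)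
Fixpoint bseq (n : nat) : seq rat :=
  match n with
  | 0 => [:: 1]
  | m.+1 => let s := bseq m in
            rcons s (- \sum_(k < m.+1) asinh_coef k.+1 * nth 0 s (m - k))
  end.

(* Cauchy numbers with level 2:  Cauchy2 n = \mathfrak C_{2n}, i.e.
   t / arcsinh t = sum_n Cauchy2 n * t^(2n) / (2n)!. *)
Definition Cauchy2 (n : nat) : rat := ((2 * n)`!)%:R * nth 0 (bseq n) n.

(* (C_0 + C_2)^n = sum_{i1+i2=n} (2n)!/((2 i1)! (2 i2)!) C_{2 i1} C_{2 i2 + 2} *)
Definition conv_C0_C2 (n : nat) : rat :=
  \sum_(i < n.+1) ((2 * n)`!)%:R / (((2 * i)`!)%:R * ((2 * (n - i))`!)%:R)
                   * Cauchy2 i * Cauchy2 (n - i).+1.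

(* (2k-1)!! for k : nat (with (-1)!! = 1) *)
Definition oddfact (k : nat) : nat := \prod_(i < k) (2 * i).+1.

(* (2m-1)!! for m : int, with the convention (-(2i+1))!! = (-1)^i/(2i-1)!!
   for i >= 1 (here m = -i). *)
Definition dfact_odd (m : int) : rat :=
  match m with
  | Posz k => (oddfact k)%:R
  | Negz k => (-1) ^+ k.+1 / (oddfact k.+1)%:R
  end.

(* Main.v *)
Require Import Defs.
From mathcomp Require Import all_boot all_order all_algebra.
From mathcomp Require Import ring lra zify.
Set Implicit Arguments. Unset Strict Implicit. Unset Printing Implicit Defensive.
Import Order.TTheory GRing.Theory Num.Theory.
Local Open Scope ring_scope.


Section Gen.
Variable R : comRingType.
Definition r1 (A B : R) := A*B - 1.
Definition r2 (A A1 B B1 : R) := A1*B + A*B1.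
Definition r3 (A A1 A2 B B1 B2 : R) := A2*B + 2*(A1*B1) + A*B2.
Definition r4 (A A1 A2 A3 B B1 B2 B3 : R) := A3*B + 3*(A2*B1) + 3*(A1*B2) + A*B3.
Definition r5 (x A A1 A2 : R) := 2*((1+x)*(A1 + 2*A2)) + x*(A + 2*A1).
Definition r6 (x A A1 A2 A3 : R) := 2*(x*(A1+2*A2)) + 2*((1+x)*(A2+2*A3)) + x*(A+2*A1) + x*(A1+2*A2).
Definition r7 (x S S1 : R) := 2*((1+x)*S1) - x*S.
Definition r8 (x S S1 S2 : R) := 2*(x*S1) + 2*((1+x)*S2) - x*S - x*S1.
Definition r9 (A A1 S : R) := S*(A + 2*A1) - 1.
Definition G3 (B B1 B2 B3 S S1 S2 : R) := 3*(B*(4*B2 - 2*B1)) + 2*(4*(B3*S) + 6*(B2*S1) + 6*(B1*S2) - 6*(B2*S) - 7*(B1*S1) - 3*(B*S2) + 2*(B1*S) + 2*(B*S1)).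

Lemma cert (x A A1 A2 A3 B B1 B2 B3 S S1 S2 : R) :
  2%:R * (A*(A*(A*(A*(A*((1+x)*((1+x)*((1+x)*((1+x)*((A+2*A1)*G3 B B1 B2 B3 S S1 S2)))))))))) =
(96 * (A * A1^+3) - 192 * (A * A1^+4 * S) + 96 * (A^+2 * A1^+2) - 288 * (A^+2 * A1^+3 * S) + 96 * (A^+2 * A1^+3 * B) + 24 * (A^+3 * A1) - 144 * (A^+3 * A1^+2 * S) + 96 * (A^+3 * A1^+2 * B) - 24 * (A^+4 * A1 * S) + 24 * (A^+4 * A1 * B) + 384 * (x * A * A1^+3) - 768 * (x * A * A1^+4 * S) + 408 * (x * A^+2 * A1^+2) - 1200 * (x * A^+2 * A1^+3 * S) + 384 * (x * A^+2 * A1^+3 * B) + 120 * (x * A^+3 * A1) - 648 * (x * A^+3 * A1^+2 * S) + 408 * (x * A^+3 * A1^+2 * B) + 6 * (x * A^+4) - 132 * (x * A^+4 * A1 * S) + 120 * (x * A^+4 * A1 * B) - 6 * (x * A^+5 * S) + 6 * (x * A^+5 * B) + 576 * (x^+2 * A * A1^+3) - 1152 * (x^+2 * A * A1^+4 * S) + 648 * (x^+2 * A^+2 * A1^+2) - 1872 * (x^+2 * A^+2 * A1^+3 * S) + 576 * (x^+2 * A^+2 * A1^+3 * B) + 216 * (x^+2 * A^+3 * A1) - 1080 * (x^+2 * A^+3 * A1^+2 * S) + 648 * (x^+2 * A^+3 * A1^+2 * B) + 18 * (x^+2 * A^+4) - 252 * (x^+2 * A^+4 * A1 * S) + 216 *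 (x^+2 * A^+4 * A1 * B) - 18 * (x^+2 * A^+5 * S) + 18 * (x^+2 * A^+5 * B) + 384 * (x^+3 * A * A1^+3) - 768 * (x^+3 * A * A1^+4 * S) + 456 * (x^+3 * A^+2 * A1^+2) - 1296 * (x^+3 * A^+2 * A1^+3 * S) + 384 * (x^+3 * A^+2 * A1^+3 * B) + 168 * (x^+3 * A^+3 * A1) - 792 * (x^+3 * A^+3 * A1^+2 * S) + 456 * (x^+3 * A^+3 * A1^+2 * B) + 18 * (x^+3 * A^+4) - 204 * (x^+3 * A^+4 * A1 * S) + 168 * (x^+3 * A^+4 * A1 * B) - 18 * (x^+3 * A^+5 * S) + 18 * (x^+3 * A^+5 * B) + 96 * (x^+4 * A * A1^+3) - 192 * (x^+4 * A * A1^+4 * S) + 120 * (x^+4 * A^+2 * A1^+2) - 336 * (x^+4 * A^+2 * A1^+3 * S) + 96 * (x^+4 * A^+2 * A1^+3 * B) + 48 * (x^+4 * A^+3 * A1) - 216 * (x^+4 * A^+3 * A1^+2 * S) + 120 * (x^+4 * A^+3 * A1^+2 * B) + 6 * (x^+4 * A^+4) - 60 * (x^+4 * A^+4 * A1 * S) + 48 * (x^+4 * A^+4 * A1 * B) - 6 * (x^+4 * A^+5 * S) + 6 * (x^+4 * A^+5 * B)) * r1 A B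
  + (192 * (A^+2 * A1^+3 * S) - 96 * (A^+3 * A1 * A2 * S) - 96 * (A^+3 * A1^+2 * S1) + 192 * (A^+3 * A1^+2 * S) - 96 * (A^+3 * A1^+2 * B) - 48 * (A^+4 * A2 * S) + 48 * (A^+4 * A1 * S2) - 104 * (A^+4 * A1 * S1) + 64 * (A^+4 * A1 * S) - 72 * (A^+4 * A1 * B) + 24 * (A^+5 * S2) - 28 * (A^+5 * S1) + 8 * (A^+5 * S) - 12 * (A^+5 * B) + 768 * (x * A^+2 * A1^+3 * S) - 384 * (x * A^+3 * A1 * A2 * S) - 384 * (x * A^+3 * A1^+2 * S1) + 768 * (x * A^+3 * A1^+2 * S) - 384 * (x * A^+3 * A1^+2 * B) - 192 * (x * A^+4 * A2 * S) + 192 * (x * A^+4 * A1 * S2) - 416 * (x * A^+4 * A1 * S1) + 256 * (x * A^+4 * A1 * S) - 288 * (x * A^+4 * A1 * B) + 96 * (x * A^+5 * S2) - 112 * (x * A^+5 * S1) + 32 * (x * A^+5 * S) - 48 * (x * A^+5 * B) + 1152 * (x^+2 * A^+2 * A1^+3 * S) - 576 * (x^+2 * A^+3 * A1 * A2 * S) - 576 * (x^+2 * A^+3 * A1^+2 * S1) + 1152 * (x^+2 * A^+3 * A1^+2 * S) - 576 * (x^+2 * A^+3 * A1^+2 * B) - 288 * (x^+2 * A^+4 * A2 * S) + 288 * (x^+2 * A^+4 * A1 * S2) - 624 * (x^+2 * A^+4 * A1 * S1) + 384 * (x^+2 * A^+4 * A1 * S) - 432 * (x^+2 * A^+4 * A1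 * B) + 144 * (x^+2 * A^+5 * S2) - 168 * (x^+2 * A^+5 * S1) + 48 * (x^+2 * A^+5 * S) - 72 * (x^+2 * A^+5 * B) + 768 * (x^+3 * A^+2 * A1^+3 * S) - 384 * (x^+3 * A^+3 * A1 * A2 * S) - 384 * (x^+3 * A^+3 * A1^+2 * S1) + 768 * (x^+3 * A^+3 * A1^+2 * S) - 384 * (x^+3 * A^+3 * A1^+2 * B) - 192 * (x^+3 * A^+4 * A2 * S) + 192 * (x^+3 * A^+4 * A1 * S2) - 416 * (x^+3 * A^+4 * A1 * S1) + 256 * (x^+3 * A^+4 * A1 * S) - 288 * (x^+3 * A^+4 * A1 * B) + 96 * (x^+3 * A^+5 * S2) - 112 * (x^+3 * A^+5 * S1) + 32 * (x^+3 * A^+5 * S) - 48 * (x^+3 * A^+5 * B) + 192 * (x^+4 * A^+2 * A1^+3 * S) - 96 * (x^+4 * A^+3 * A1 * A2 * S) - 96 * (x^+4 * A^+3 * A1^+2 * S1) + 192 * (x^+4 * A^+3 * A1^+2 * S) - 96 * (x^+4 * A^+3 * A1^+2 * B) - 48 * (x^+4 * A^+4 * A2 * S) + 48 * (x^+4 * A^+4 * A1 * S2) - 104 * (x^+4 * A^+4 * A1 * S1) + 64 * (x^+4 * A^+4 * A1 * S) - 72 * (x^+4 * A^+4 * A1 * B) + 24 * (x^+4 * A^+5 * S2) - 28 * (x^+4 * A^+5 * S1) + 8 * (x^+4 * A^+5 * S) - 12 * (x^+4 * A^+5 * B)) * r2 A A1 B B1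
  + (- 96 * (A^+3 * A1^+2 * S) + 48 * (A^+4 * A1 * S1) - 96 * (A^+4 * A1 * S) + 48 * (A^+4 * A1 * B) + 24 * (A^+5 * S1) - 24 * (A^+5 * S) + 24 * (A^+5 * B) - 384 * (x * A^+3 * A1^+2 * S) + 192 * (x * A^+4 * A1 * S1) - 384 * (x * A^+4 * A1 * S) + 192 * (x * A^+4 * A1 * B) + 96 * (x * A^+5 * S1) - 96 * (x * A^+5 * S) + 96 * (x * A^+5 * B) - 576 * (x^+2 * A^+3 * A1^+2 * S) + 288 * (x^+2 * A^+4 * A1 * S1) - 576 * (x^+2 * A^+4 * A1 * S) + 288 * (x^+2 * A^+4 * A1 * B) + 144 * (x^+2 * A^+5 * S1) - 144 * (x^+2 * A^+5 * S) + 144 * (x^+2 * A^+5 * B) - 384 * (x^+3 * A^+3 * A1^+2 * S) + 192 * (x^+3 * A^+4 * A1 * S1) - 384 * (x^+3 * A^+4 * A1 * S) + 192 * (x^+3 * A^+4 * A1 * B) + 96 * (x^+3 * A^+5 * S1) - 96 * (x^+3 * A^+5 * S) + 96 * (x^+3 * A^+5 * B) - 96 * (x^+4 * A^+3 * A1^+2 * S) + 48 * (x^+4 * A^+4 * A1 * S1) - 96 * (x^+4 * A^+4 * A1 * S) + 48 * (x^+4 * A^+4 * A1 * B) + 24 * (x^+4 * A^+5 * S1) - 24 * (x^+4 * A^+5 * S) + 24 * (x^+4 * A^+5 * B)) * r3 A A1 A2 B B1 B2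
  + (32 * (A^+4 * A1 * S) + 16 * (A^+5 * S) + 128 * (x * A^+4 * A1 * S) + 64 * (x * A^+5 * S) + 192 * (x^+2 * A^+4 * A1 * S) + 96 * (x^+2 * A^+5 * S) + 128 * (x^+3 * A^+4 * A1 * S) + 64 * (x^+3 * A^+5 * S) + 32 * (x^+4 * A^+4 * A1 * S) + 16 * (x^+4 * A^+5 * S)) * r4 A A1 A2 A3 B B1 B2 B3
  + (48 * (A^+3 * A1^+2 * B * S) + 40 * (A^+4 * A1 * B * S) - 12 * (A^+4 * A1 * B^+2) + 8 * (A^+5 * B * S) - 6 * (A^+5 * B^+2) + 144 * (x * A^+3 * A1^+2 * B * S) + 126 * (x * A^+4 * A1 * B * S) - 36 * (x * A^+4 * A1 * B^+2) + 27 * (x * A^+5 * B * S) - 18 * (x * A^+5 * B^+2) + 144 * (x^+2 * A^+3 * A1^+2 * B * S) + 132 * (x^+2 * A^+4 * A1 * B * S) - 36 * (x^+2 * A^+4 * A1 * B^+2) + 30 * (x^+2 * A^+5 * B * S) - 18 * (x^+2 * A^+5 * B^+2) + 48 * (x^+3 * A^+3 * A1^+2 * B * S) + 46 * (x^+3 * A^+4 * A1 * B * S) - 12 * (x^+3 * A^+4 * A1 * B^+2) + 11 * (x^+3 * A^+5 * B * S) - 6 * (x^+3 * A^+5 * B^+2)) * r5 x A A1 A2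
  + (- 8 * (A^+4 * A1 * B * S) - 4 * (A^+5 * B * S) - 24 * (x * A^+4 * A1 * B * S) - 12 * (x * A^+5 * B * S) - 24 * (x^+2 * A^+4 * A1 * B * S) - 12 * (x^+2 * A^+5 * B * S) - 8 * (x^+3 * A^+4 * A1 * B * S) - 4 * (x^+3 * A^+5 * B * S)) * r6 x A A1 A2 A3
  + (48 * (A^+3 * A1^+3 * B) - 24 * (A^+4 * A1 * A2 * B) + 52 * (A^+4 * A1^+2 * B) - 12 * (A^+5 * A2 * B) + 22 * (A^+5 * A1 * B) + 4 * (A^+6 * B) + 144 * (x * A^+3 * A1^+3 * B) - 72 * (x * A^+4 * A1 * A2 * B) + 168 * (x * A^+4 * A1^+2 * B) - 36 * (x * A^+5 * A2 * B) + 78 * (x * A^+5 * A1 * B) + 15 * (x * A^+6 * B) + 144 * (x^+2 * A^+3 * A1^+3 * B) - 72 * (x^+2 * A^+4 * A1 * A2 * B) + 180 * (x^+2 * A^+4 * A1^+2 * B) - 36 * (x^+2 * A^+5 * A2 * B) + 90 * (x^+2 * A^+5 * A1 * B) + 18 * (x^+2 * A^+6 * B) + 48 * (x^+3 * A^+3 * A1^+3 * B) - 24 * (x^+3 * A^+4 * A1 * A2 * B) + 64 * (x^+3 * A^+4 * A1^+2 * B) - 12 * (x^+3 * A^+5 * A2 * B) + 34 * (x^+3 * A^+5 * A1 * B) + 7 * (x^+3 * A^+6 * B)) * r7 x S S1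
  + (- 24 * (A^+4 * A1^+2 * B) - 24 * (A^+5 * A1 * B) - 6 * (A^+6 * B) - 72 * (x * A^+4 * A1^+2 * B) - 72 * (x * A^+5 * A1 * B) - 18 * (x * A^+6 * B) - 72 * (x^+2 * A^+4 * A1^+2 * B) - 72 * (x^+2 * A^+5 * A1 * B) - 18 * (x^+2 * A^+6 * B) - 24 * (x^+3 * A^+4 * A1^+2 * B) - 24 * (x^+3 * A^+5 * A1 * B) - 6 * (x^+3 * A^+6 * B)) * r8 x S S1 S2
  + (- 96 * (A * A1^+3) - 96 * (A^+2 * A1^+2) - 24 * (A^+3 * A1) - 384 * (x * A * A1^+3) - 408 * (x * A^+2 * A1^+2) - 120 * (x * A^+3 * A1) - 6 * (x * A^+4) - 576 * (x^+2 * A * A1^+3) - 648 * (x^+2 * A^+2 * A1^+2) - 216 * (x^+2 * A^+3 * A1) - 18 * (x^+2 * A^+4) - 384 * (x^+3 * A * A1^+3) - 456 * (x^+3 * A^+2 * A1^+2) - 168 * (x^+3 * A^+3 * A1) - 18 * (x^+3 * A^+4) - 96 * (x^+4 * A * A1^+3) - 120 * (x^+4 * A^+2 * A1^+2) - 48 * (x^+4 * A^+3 * A1) - 6 * (x^+4 * A^+4)) * r9 A A1 S.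
Proof. rewrite /r1 /r2 /r3 /r4 /r5 /r6 /r7 /r8 /r9 /G3. ring. Qed.
End Gen.


Definition th (p : {poly rat}) : {poly rat} := 'X * p^`().

Lemma coef_th p k : (th p)`_k = p`_k * k%:R.
Proof.
rewrite /th coefXM; case: k => [|k] /=; first by rewrite mulr0.
by rewrite coef_deriv mulr_natr.
Qed.

Lemma th_add p q : th (p + q) = th p + th q.
Proof. by rewrite /th derivD mulrDr. Qed.
Lemma th_sub p q : th (p - q) = th p - th q.
Proof. by rewrite /th derivB mulrBr. Qed.
Lemma th_opp p : th (- p) = - th p.
Proof. by rewrite /th derivN mulrN. Qed.
Lemma th_mul p q : th (p * q) = th p * q + p * th q.
Proof. rewrite /th derivM; ring. Qed.
Lemma th_nat k : th k%:R = 0.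
Proof. by rewrite /th -polyC_natr derivC mulr0. Qed.
Lemma th1 : th 1 = 0.
Proof. by rewrite -[1]/(1%:R) th_nat. Qed.
Lemma thX : th 'X = 'X.
Proof. by rewrite /th derivX mulr1. Qed.

Section I.
Variable N : nat.
Definition inI (p : {poly rat}) := forall k, (k < N)%N -> p`_k = 0.

Lemma inI_add p q : inI p -> inI q -> inI (p + q).
Proof. by move=> hp hq k hk; rewrite coefD hp // hq // addr0. Qed.
Lemma inI_mull c p : inI p -> inI (c * p).
Proof.
move=> hp k hk; rewrite coefM big1 // => i _; rewrite hp ?mulr0 //.
apply: leq_ltn_trans hk; exact: leq_subr.
Qed.
Lemma inI_th p : inI p -> inI (th p).
Proof. by move=> hp k hk; rewrite coef_th hp // mul0r. Qed.
Lemma inI_eq p q : p = q -> inI p -> inI q.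
Proof. by move=> ->. Qed.
Lemma inI_cancel a b p : inI (b * a - 1) -> inI (a * p) -> inI p.
Proof.
move=> hab hap.
have -> : p = b * (a * p) - (b * a - 1) * p by ring.
apply: inI_add; first exact: inI_mull.
have -> : - ((b * a - 1) * p) = (-p) * (b*a - 1) by ring.
exact: inI_mull.
Qed.
Lemma inI_cancelX p : inI ((1 + 'X) * p) -> inI p.
Proof.
move=> h k; elim: k => [|k IH] hk.
  by have := h 0%N hk; rewrite mulrDl mul1r coefD coefXM /= addr0.
have := h k.+1 hk; rewrite mulrDl mul1r coefD coefXM /= IH ?addr0 //.
exact: ltnW.
Qed.
Lemma inI_cancelN (d : nat) p : (0 < d)%N -> inI (d%:R * p) -> inI p.
Proof.
move=> hd h k hk; have := h k hk.
rewrite -polyC_natr coefCM => /eqP; rewrite mulf_eq0 pnatr_eq0.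
have -> : (d == 0%N) = false by move: hd; case: d {h}.
by move/eqP.

Qed.
End I.


Definition a k := asinh_coef k.
Definition b k := nth 0 (Defs.bseq k) k.
Definition s k : rat := if k is k'.+1 then (-1)^+k' * (oddfact k')%:R / (2^+k'.+1 * (k'.+1)`!%:R) else 1.

Lemma size_bseq m : size (Defs.bseq m) = m.+1.
Proof. by elim: m => //= m IH; rewrite size_rcons IH. Qed.

Lemma nth_bseq m i : (i <= m)%N -> nth 0 (Defs.bseq m) i = b i.
Proof.
elim: m => [|m IH] hi; first by move: hi; rewrite leqn0 => /eqP ->.
case: (ltnP i m.+1) => h.
  by rewrite /= nth_rcons size_bseq h IH.
have -> : i = m.+1 by apply/eqP; rewrite eqn_leq hi h.
by [].
Qed.

Lemma b_rec m : b m.+1 = - \sum_(k < m.+1) a k.+1 * b (m - k).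
Proof.
rewrite /b /= nth_rcons size_bseq ltnn eqxx; congr (- _).
by apply: eq_bigr => k _; rewrite nth_bseq // leq_subr.
Qed.

Lemma b0 : b 0 = 1. Proof. by []. Qed.
Lemma a0 : a 0 = 1. Proof. by rewrite /a /asinh_coef expr0 mul1r muln0 fact0. Qed.

Lemma conv k : \sum_(i < k.+1) a i * b (k - i) = (k == 0%N)%:R.
Proof.
case: k => [|m]; first by rewrite big_ord1 a0 b0 mulr1.
rewrite big_ord_recl a0 mul1r subn0 b_rec /=.
rewrite addrC; apply/eqP; rewrite subr_eq0; apply/eqP; apply: eq_bigr => i _.
by rewrite /bump leq0n add1n subSS.
Qed.

Lemma fact_neq0 m : (m`!)%:R != 0 :> rat.
Proof. by rewrite pnatr_eq0 -lt0n fact_gt0. Qed.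

Lemma arec j : 2*(j%:R+1)*(2*j%:R+3) * a j.+1 = -(2*j%:R+1)^+2 * a j.
Proof.
rewrite /a /asinh_coef.
have e1 : (2 * j.+1 = (2*j).+2)%N by lia.
rewrite e1 !factS expnS.
have c1 : ((2*j).+2%:R : rat) = 2*j%:R + 2 by rewrite -addn2 natrD natrM.
have c2 : ((2*j).+1%:R : rat) = 2*j%:R + 1 by rewrite -addn1 natrD natrM.
have c3 : ((2*j).+3%:R : rat) = 2*j%:R + 3 by rewrite -addn3 natrD natrM.
have c4 : ((j.+1)%:R : rat) = j%:R + 1 by rewrite -addn1 natrD.
rewrite !natrM !natrX ?natrM c1 c2 c3 c4 !exprS expr0.
have h4 : ((4 ^ j)%:R : rat) != 0 by rewrite pnatr_eq0 expn_eq0.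
have hj := fact_neq0 j; have h2j := fact_neq0 (2*j).
have hj1 : (j%:R + 1 : rat) != 0 by rewrite -c4 pnatr_eq0.
have hj2 : (2*j%:R + 1 : rat) != 0 by rewrite -c2 pnatr_eq0.
have hj3 : (2*j%:R + 3 : rat) != 0 by rewrite -c3 pnatr_eq0.
field.
by rewrite hj3 hj1 hj hj2 expf_neq0.
Qed.

Lemma srec k : 2*(k%:R+1) * s k.+1 = (1 - 2*k%:R) * s k.
Proof.
case: k => [|j]; first by rewrite /s /= /oddfact big_ord0 !mul1r.
rewrite /s /oddfact big_ord_recr /= factS.
set P := (\prod_(i < j) (2 * i).+1)%N.
have c2 : ((2*j).+1%:R : rat) = 2*j%:R + 1 by rewrite -addn1 natrD natrM.
have c4 : ((j.+1)%:R : rat) = j%:R + 1 by rewrite -addn1 natrD.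
have c5 : ((j.+2)%:R : rat) = j%:R + 2 by rewrite -addn2 natrD.
rewrite !natrM c2 c4 c5 !exprS.
have hj := fact_neq0 j.
have hj1 : (j%:R + 1 : rat) != 0 by rewrite -c4 pnatr_eq0.
have h2 : (2 ^+ j : rat) != 0 by rewrite expf_neq0.
have hj2 : (j%:R + 2 : rat) != 0 by rewrite -c5 pnatr_eq0.
field.
by apply/and4P; split.
Qed.


Lemma coef_natl (d : nat) (p : {poly rat}) i : (d%:R * p)`_i = d%:R * p`_i.
Proof. by rewrite -polyC_natr coefCM. Qed.

Lemma coef1X (p : {poly rat}) k : ((1 + 'X) * p)`_k = p`_k + (if k == 0%N then 0 else p`_k.-1).
Proof. by rewrite mulrDl mul1r coefD coefXM. Qed.

Section Main.
Variable n : nat.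
Let N := n.+2.
Definition Ap := \poly_(i < N) a i.
Definition Bp := \poly_(i < N) b i.
Definition Sp := \poly_(i < N) s i.
Lemma coefAp i : (i < N)%N -> Ap`_i = a i. Proof. by move=> h; rewrite coef_poly h. Qed.
Lemma coefBp i : (i < N)%N -> Bp`_i = b i. Proof. by move=> h; rewrite coef_poly h. Qed.
Lemma coefSp i : (i < N)%N -> Sp`_i = s i. Proof. by move=> h; rewrite coef_poly h. Qed.

Lemma h1 : inI N (r1 Ap Bp).
Proof.
move=> k hk; rewrite /r1 coefB coefM coef1.
rewrite (eq_bigr (fun i : 'I_k.+1 => a i * b (k - i))); first by rewrite conv subrr.
move=> i _; rewrite coefAp ?coefBp //.
  by apply: leq_ltn_trans hk; exact: leq_subr.
by apply: leq_ltn_trans hk; rewrite -ltnS.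
Qed.

Lemma h5 : inI N (r5 'X Ap (th Ap) (th (th Ap))).
Proof.
move=> k hk; rewrite /r5 !(coefD, coef_natl, coef1X, coefXM, coef_th).
case: k hk => [|j] hk /=; first by rewrite !(mulr0, mul0r, addr0).
rewrite !coefAp //; last exact: ltnW.
have c4 : ((j.+1)%:R : rat) = j%:R + 1 by rewrite -addn1 natrD.
rewrite c4.
transitivity (2*(j%:R+1)*(2*j%:R+3) * a j.+1 - (-(2*j%:R+1)^+2 * a j)); first ring.
by rewrite arec subrr.
Qed.

Lemma h7 : inI N (r7 'X Sp (th Sp)).
Proof.
move=> k hk; rewrite /r7 !(coefD, coefB, coefN, coef_natl, coef1X, coefXM, coef_th).
case: k hk => [|j] hk /=; first by rewrite !(mulr0, mul0r, addr0, subr0, oppr0).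
rewrite !coefSp //; last exact: ltnW.
have c4 : ((j.+1)%:R : rat) = j%:R + 1 by rewrite -addn1 natrD.
rewrite c4.
transitivity (2*(j%:R+1) * s j.+1 - (1 - 2*j%:R) * s j); first ring.
by rewrite srec subrr.
Qed.

Ltac thx := rewrite ?(th_add, th_sub, th_opp, th_mul, th_nat, th1, thX).

Lemma h2 : inI N (r2 Ap (th Ap) Bp (th Bp)).
Proof.
apply: (inI_eq _ (inI_th h1)); rewrite /r1 /r2; thx; ring.
Qed.
Lemma h3 : inI N (r3 Ap (th Ap) (th (th Ap)) Bp (th Bp) (th (th Bp))).
Proof.
apply: (inI_eq _ (inI_th h2)); rewrite /r2 /r3; thx; ring.
Qed.
Lemma h4 : inI N (r4 Ap (th Ap) (th (th Ap)) (th (th (th Ap))) Bp (th Bp) (th (th Bp)) (th (th (th Bp)))).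
Proof.
apply: (inI_eq _ (inI_th h3)); rewrite /r3 /r4; thx; ring.
Qed.
Lemma h6 : inI N (r6 'X Ap (th Ap) (th (th Ap)) (th (th (th Ap)))).
Proof.
apply: (inI_eq _ (inI_th h5)); rewrite /r5 /r6; thx; ring.
Qed.
Lemma h8 : inI N (r8 'X Sp (th Sp) (th (th Sp))).
Proof.
apply: (inI_eq _ (inI_th h7)); rewrite /r7 /r8; thx; ring.
Qed.
Lemma h9 : inI N (r9 Ap (th Ap) Sp).
Proof.
set P := r9 Ap (th Ap) Sp.
have hP : inI N (th P).
  apply: inI_cancelX; apply: (@inI_cancelN _ 2) => //.
  have e : r7 'X Sp (th Sp) * (Ap + 2 * th Ap) + Sp * r5 'X Ap (th Ap) (th (th Ap))
     = 2%:R * ((1 + 'X) * th P).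
    rewrite /P /r5 /r7 /r9; thx; ring.
  rewrite -e; apply: inI_add; last exact: inI_mull h5.
  rewrite mulrC; exact: inI_mull h7.
move=> k hk; case: k hk => [|j] hk.
  rewrite /P /r9 coefB coefM big_ord1 coef1 coefD coef_natl coef_th !coefAp ?coefSp //.
have := hP _ hk; rewrite coef_th => /eqP; rewrite mulf_eq0 pnatr_eq0 orbF.
by move/eqP.
Qed.

Lemma hG : inI N (G3 Bp (th Bp) (th (th Bp)) (th (th (th Bp))) Sp (th Sp) (th (th Sp))).
Proof.
have hBA : inI N (Bp * Ap - 1) by rewrite mulrC; exact: h1.
apply: (inI_cancel h9).
do 4 apply: inI_cancelX.
do 5 apply: (inI_cancel hBA).
apply: (@inI_cancelN _ 2) => //.
rewrite (cert _ _ _ (th (th Ap)) (th (th (th Ap)))).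
repeat (apply: inI_add).
all: apply: inI_mull.
all: first [exact: h1 | exact: h2 | exact: h3 | exact: h4 | exact: h5 | exact: h6 | exact: h7 | exact: h8 | exact: h9].
Qed.
End Main.


Definition Q (l m : nat) : rat :=
  4 * l%:R ^+ 3 + 6 * m%:R * l%:R ^+ 2 + 6 * m%:R ^+ 2 * l%:R - 6 * l%:R ^+ 2
  - 7 * m%:R * l%:R - 3 * m%:R ^+ 2 + 2 * l%:R + 2 * m%:R.

Section Key.
Variable n : nat.
Definition T1 := \sum_(i < n.+2) b i * (b (n.+1 - i) * (4 * (n.+1 - i)%:R ^+ 2 - 2 * (n.+1 - i)%:R)).
Definition T2 := \sum_(l < n.+2) b l * s (n.+1 - l) * Q l (n.+1 - l).

Lemma key : 3 * T1 + 2 * T2 = 0.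
Proof.
have := @hG n n.+1 (ltnSn _).
rewrite /G3 !(coefD, coefB, coefN, coef_natl) !coefM => <-.
rewrite /T1 /T2.
rewrite !mulr_sumr -!sumrN -!big_split /= !mulr_sumr -!big_split /=.
apply: eq_bigr => l _.
have hl : (l < n.+2)%N := ltn_ord l.
have hm : (n.+1 - l < n.+2)%N by rewrite ltnS leq_subr.
rewrite !(coefD, coefB, coefN, coef_natl, coef_th) !coefBp // !coefSp //.
rewrite /Q; ring.
Qed.
End Key.


Lemma intrP (m : nat) : ((m%:Z)%:~R : rat) = m%:R.
Proof. by []. Qed.

Lemma lhsE n : conv_C0_C2 n = ((2 * n)`!)%:R * T1 n.
Proof.
rewrite /conv_C0_C2 /T1 [in RHS]big_ord_recr /= subnn (_ : (4 * 0%:R ^+ 2 - 2 * 0%:R : rat) = 0); last by ring.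
rewrite !mulr0 addr0 mulr_sumr.
apply: eq_bigr => i _.
have hi : (i <= n)%N := leq_ord i.
rewrite /Cauchy2 -/(b i) -/(b (n - i).+1) subSn //.
set m := (n - i)%N.
have e : (2 * m.+1 = (2 * m).+2)%N by lia.
rewrite e !factS.
have c1 : ((2 * m).+2%:R : rat) = 2 * m%:R + 2 by rewrite -addn2 natrD natrM.
have c2 : ((2 * m).+1%:R : rat) = 2 * m%:R + 1 by rewrite -addn1 natrD natrM.
have c4 : ((m.+1)%:R : rat) = m%:R + 1 by rewrite -addn1 natrD.
rewrite !natrM c1 c2 c4.
have h1 := fact_neq0 (2 * i); have h2 := fact_neq0 (2 * m).
field.
by rewrite h1 h2.
Qed.

Lemma dfm1 : dfact_odd (-1) = -1.
Proof. by rewrite /dfact_odd /= /oddfact big_ord1 /= expr1 muln0 divr1. Qed.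

Lemma termE n (l : nat) : (l <= n.+1)%N ->
  3 * ((((-1) ^ (n%:Z - l%:Z - 1) : rat)
      * ((2 * l)%:Z - 1)%:~R
      * ((3 * n ^ 2)%:Z - (3 * n * l)%:Z + (2 * l ^ 2)%:Z + (4 * n)%:Z
           - (3 * l)%:Z + 1)%:~R
      * dfact_odd (n%:Z - l%:Z)
      / (3 * (2 : rat) ^ (n%:Z - l%:Z) * ((n.+1 - l)`!)%:R
           * ((2 * l)`!)%:R))
     * Cauchy2 l) = - 2 * (b l * s (n.+1 - l) * Q l (n.+1 - l)).
Proof.
move=> hl.
rewrite /Cauchy2 -/(b l) !(intrD, intrN, intrP) !natrM expN1r.
have hf := fact_neq0 (2 * l).
case: (ltnP n l) => hnl.
  have el : l = n.+1 by apply/eqP; rewrite eqn_leq hl hnl.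
  subst l.
  have -> : (n%:Z - n.+1%:Z) = -1 by lia.
  rewrite subnn /s dfm1 exprN1 (_ : (`|(-1 - 1)%R|)%N = 2%N); last by [].
rewrite /Q.
  have c4 : ((n.+1)%:R : rat) = n%:R + 1 by rewrite -addn1 natrD.
  rewrite c4 fact0.
  move: hf; set F := (2 * n.+1)`!%:R; set B := b n.+1; set m := (n%:R : rat) => hf.
  field.
  by rewrite hf.
have [k ek] : exists k, n = (l + k)%N by exists (n - l)%N; lia.
subst n.
have -> : ((l + k)%:Z - l%:Z) = k%:Z by lia.
have -> : ((l + k).+1 - l = k.+1)%N by lia.
rewrite /s /dfact_odd.
have sg : ((-1) ^+ `|(k%:Z - 1)%R| : rat) = - (-1)^+k.
  case: k {hl hnl} => [|j]; first by rewrite /= expr1 expr0.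
  have -> : `|(j.+1%:Z - 1)%R|%N = j by lia.
  by rewrite exprS mulN1r opprK.
rewrite sg -exprnP factS natrM !natrD /Q.
have c4 : ((k.+1)%:R : rat) = k%:R + 1 by rewrite -addn1 natrD.
rewrite c4.
have hk := fact_neq0 k.
have hk1 : (k%:R + 1 : rat) != 0 by rewrite -c4 pnatr_eq0.
have h2 : (2 ^+ k : rat) != 0 by rewrite expf_neq0.
rewrite exprS.
move: h2; set E := ((-1) ^+ k : rat); set P2 := (2 ^+ k : rat) => h2.
field.
by rewrite hk1 hk h2 hf.
Qed.

Theorem theorem3 (n : nat) :
  conv_C0_C2 n =
  ((2 * n)`!)%:R *
  \sum_(l < n.+2)
     (((-1) ^ (n%:Z - l%:Z - 1) : rat)
      * ((2 * l)%:Z - 1)%:~R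
      * ((3 * n ^ 2)%:Z - (3 * n * l)%:Z + (2 * l ^ 2)%:Z + (4 * n)%:Z
           - (3 * l)%:Z + 1)%:~R
      * dfact_odd (n%:Z - l%:Z)
      / (3 * (2 : rat) ^ (n%:Z - l%:Z) * ((n.+1 - l)`!)%:R
           * ((2 * l)`!)%:R))
     * Cauchy2 l.
Proof.
rewrite lhsE; congr (_ * _).
set S := \sum_(l < n.+2) _.
have h : 3 * S = -2 * T2 n.
  rewrite /S /T2 !mulr_sumr; apply: eq_bigr => l _; exact: termE (leq_ord l).
have := key n.
move: h; set t1 := T1 n; set t2 := T2 n => h k.
lra.
Qed.
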